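(* Let $d\ge1$ and for $k=1,2$ let $(\boldsymbol X_k,Y_k)=(X_{k,1},\ldots,X_{k,d},Y_k)$ be a random vector with continuous marginals and $(d+1)$-dimensional copula $C_k$. Fix $\boldsymbol{\alpha}\in[0,1)^d$ with $C_k(\boldsymbol\alpha,1)<1$, and set $l_{\boldsymbol\alpha}(v)=\dfrac{v-C_1(\boldsymbol\alpha,v)}{v-C_2(\boldsymbol\alpha,v)}$. Suppose at least one of $C_1,C_2$ is $\mathrm{LTD}^1_{d+1}$ and $l_{\boldsymbol\alpha}(v)\ge l_{\boldsymbol\alpha}(1)$ for all $v\in(0,1]$. (i) If $Y_1\le_{\rm disp}Y_2$, then $\Delta\mathrm{VCoVaR}_{\boldsymbol\alpha,\beta}(Y_1|\boldsymbol X_1)\le\Delta\mathrm{VCoVaR}_{\boldsymbol\alpha,\beta}(Y_2|\boldsymbol X_2)$ for all $\beta\in(0,1)$. (ii) If $Y_1\le_\star Y_2$, then $\Delta^R\mathrm{VCoVaR}_{\boldsymbol\alpha,\beta}(Y_1|\boldsymbol X_1)\le\Delta^R\mathrm{VCoVaR}_{\boldsymbol\alpha,\beta}(Y_2|\boldsymbol X_2)$ for all $\beta\in(0,1)$.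
   Context: $C(\boldsymbol{\alpha},v)=C(\alpha_1,\ldots,\alpha_d,v)$. $F^{-1}(t)=\inf\{x:F(x)\ge t\}$, $\mathrm{VaR}_t(Z)=F_Z^{-1}(t)$. $\mathrm{VCoVaR}_{\boldsymbol\alpha,\beta}(Y_k|\boldsymbol X_k)$ is the $\beta$-quantile of the conditional distribution of $Y_k$ given $\{\exists\, i: X_{k,i}>\mathrm{VaR}_{\alpha_i}(X_{k,i})\}$. $\Delta\mathrm{VCoVaR}_{\boldsymbol\alpha,\beta}(Y|\boldsymbol X)=\mathrm{VCoVaR}_{\boldsymbol\alpha,\beta}(Y|\boldsymbol X)-\mathrm{VaR}_\beta(Y)$ and $\Delta^R\mathrm{VCoVaR}_{\boldsymbol\alpha,\beta}(Y|\boldsymbol X)=\Delta\mathrm{VCoVaR}_{\boldsymbol\alpha,\beta}(Y|\boldsymbol X)/\mathrm{VaR}_\beta(Y)$. A $(d+1)$-dimensional copula $C$ is $\mathrm{LTD}^1_{d+1}$ if, for $(U_1,\ldots,U_d,V)\sim C$, $P(U_1\le u_1,\ldots,U_d\le u_d\mid V\le v)$ is nonincreasing in $v$ for all $u_1,\ldots,u_d$ (i.e. $C(u_1,\ldots,u_d,v)/v$ is nonincreasing in $v$). Orders: $Y_1\le_{\rm disp}Y_2$ if $F_{Y_1}^{-1}(v)-F_{Y_1}^{-1}(u)\le F_{Y_2}^{-1}(v)-F_{Y_2}^{-1}(u)$ for all $0<u\le v<1$; $Y_1\le_\star Y_2$ if $F_{Y_2}^{-1}(u)/F_{Y_1}^{-1}(u)$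 is increasing in $u\in(0,1)$. *)

(* Defs.v *)
From HB Require Import structures.
From mathcomp Require Import all_boot all_order all_algebra.
From mathcomp Require Import all_classical all_reals all_analysis.

Set Implicit Arguments.
Unset Strict Implicit.
Unset Printing Implicit Defensive.

Import Order.TTheory GRing.Theory Num.Theory numFieldNormedType.Exports.
Local Open Scope classical_set_scope.
Local Open Scope ring_scope.

Definition Fdist (d0 : measure_display) (T : measurableType d0) (R : realType)
  (P : probability T R) (Z : {RV P >-> R}) (y : R) : R := fine (cdf Z y).

(* Generalized inverse F^{-1}(t) = inf {x : F x >= t}, in the extended reals
   (so that F^{-1}(0) = -oo). *)
Definition qinvE (R : realType) (F : R -> R) (t : R) : \bar R :=
  ereal_inf [set x%:E | x in [set x : R | t <= F x]].

(* Real-valued version (finite for t in (0,1) when F is a distribution fn). *)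
Definition qinv (R : realType) (F : R -> R) (t : R) : R := fine (qinvE F t).

Definition VaRE (d0 : measure_display) (T : measurableType d0) (R : realType)
  (P : probability T R) (Z : {RV P >-> R}) (t : R) : \bar R :=
  qinvE (Fdist Z) t.
Definition VaR (d0 : measure_display) (T : measurableType d0) (R : realType)
  (P : probability T R) (Z : {RV P >-> R}) (t : R) : R :=
  qinv (Fdist Z) t.

Definition vevent (d0 : measure_display) (T : measurableType d0) (R : realType)
  (P : probability T R) (n : nat) (X : 'I_n -> {RV P >-> R}) (alpha : 'I_n -> R)
  : set T :=
  [set w | exists i, (VaRE (X i) (alpha i) < (X i w)%:E)%E].

Definition cond_cdf (d0 : measure_display) (T : measurableType d0) (R : realType)
  (P : probability T R) (E : set T) (Y : {RV P >-> R}) (y : R) : R :=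
  fine (P ([set w | Y w <= y] `&` E)) / fine (P E).

Definition VCoVaR (d0 : measure_display) (T : measurableType d0) (R : realType)
  (P : probability T R) (n : nat) (X : 'I_n -> {RV P >-> R}) (Y : {RV P >-> R})
  (alpha : 'I_n -> R) (beta : R) : R :=
  qinv (cond_cdf (vevent X alpha) Y) beta.

Definition DVCoVaR (d0 : measure_display) (T : measurableType d0) (R : realType)
  (P : probability T R) (n : nat) (X : 'I_n -> {RV P >-> R}) (Y : {RV P >-> R})
  (alpha : 'I_n -> R) (beta : R) : R :=
  VCoVaR X Y alpha beta - VaR Y beta.

Definition DRVCoVaR (d0 : measure_display) (T : measurableType d0) (R : realType)
  (P : probability T R) (n : nat) (X : 'I_n -> {RV P >-> R}) (Y : {RV P >-> R})
  (alpha : 'I_n -> R) (beta : R) : R :=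
  DVCoVaR X Y alpha beta / VaR Y beta.

Definition in01 (R : realType) (t : R) : Prop := 0 <= t <= 1.

(* An n-dimensional copula (only its values on [0,1]^n matter):
   grounded, uniform one-dimensional margins, n-increasing. *)
Definition is_copula (R : realType) (n : nat) (C : ('I_n -> R) -> R) : Prop :=
  [/\ (forall u : 'I_n -> R, (forall i, in01 (u i)) ->
         (exists i, u i = 0) -> C u = 0),
      (forall (i : 'I_n) (t : R), in01 t ->
         C (fun j => if j == i then t else 1) = t) &
      (forall a b : 'I_n -> R, (forall i, in01 (a i)) -> (forall i, in01 (b i)) ->
         (forall i, a i <= b i) ->
         0 <= \sum_(S : {set 'I_n}) (-1) ^+ #|S| *
                 C (fun i => if i \in S then a i else b i))].

(* C(alpha_1,...,alpha_d, v) for a (d+1)-dimensional C *)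
Definition Cav (R : realType) (d : nat) (C : ('I_d.+1 -> R) -> R)
  (a : 'I_d -> R) (v : R) : R :=
  C (fun i => if unlift ord_max i is Some j then a j else v).

Definition copula_of (d0 : measure_display) (T : measurableType d0) (R : realType)
  (P : probability T R) (d : nat) (X : 'I_d -> {RV P >-> R}) (Y : {RV P >-> R})
  (C : ('I_d.+1 -> R) -> R) : Prop :=
  is_copula C /\
  forall (x : 'I_d -> R) (y : R),
    fine (P [set w | (forall i, X i w <= x i) /\ Y w <= y]) =
    Cav C (fun i => Fdist (X i) (x i)) (Fdist Y y).

Definition LTD1 (R : realType) (d : nat) (C : ('I_d.+1 -> R) -> R) : Prop :=
  forall u : 'I_d -> R, (forall i, in01 (u i)) ->
  forall v v' : R, 0 < v -> v <= v' -> v' <= 1 ->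
    Cav C u v' / v' <= Cav C u v / v.

Definition l_alpha (R : realType) (d : nat) (C1 C2 : ('I_d.+1 -> R) -> R)
  (a : 'I_d -> R) (v : R) : R :=
  (v - Cav C1 a v) / (v - Cav C2 a v).

Definition disp_le (R : realType) (F1 F2 : R -> R) : Prop :=
  forall u v : R, 0 < u -> u <= v -> v < 1 ->
    qinv F1 v - qinv F1 u <= qinv F2 v - qinv F2 u.

(* star order; quantile functions are required positive on (0,1) so that the
   ratio is meaningful (star order is an order on positive variables). *)
Definition star_le (R : realType) (F1 F2 : R -> R) : Prop :=
  (forall u : R, 0 < u < 1 -> 0 < qinv F1 u /\ 0 < qinv F2 u) /\
  (forall u v : R, 0 < u -> u <= v -> v < 1 ->
    qinv F2 u / qinv F1 u <= qinv F2 v / qinv F1 v).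

(* Main.v *)
Require Import Defs.
From HB Require Import structures.
From mathcomp Require Import all_boot all_order all_algebra.
From mathcomp Require Import all_classical all_reals all_analysis.
From mathcomp Require Import ring lra.
Set Implicit Arguments.
Unset Strict Implicit.
Unset Printing Implicit Defensive.
Import Order.TTheory GRing.Theory Num.Theory numFieldNormedType.Exports.
Local Open Scope classical_set_scope.
Local Open Scope ring_scope.
Section Quant.
Variable R : realType.

Lemma near_pt_lt (F : R -> R) (x t : R) : continuous F -> F x < t ->
  exists2 e, 0 < e & forall z, `|x - z| < e -> F z < t.
Proof.
move=> cF Fx.
have : \forall z \near x, F z < t by exact: (cvgr_lt _ (cF x)).
move/nbhs_ballP => -[e e0 He]; exists e => // z hz; apply: He.
Qed.

Lemma near_pt_gt (F : R -> R) (x t : R) : continuous F -> t < F x ->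
  exists2 e, 0 < e & forall z, `|x - z| < e -> t < F z.
Proof.
move=> cF Fx.
have : \forall z \near x, t < F z by exact: (cvgr_gt _ (cF x)).
move/nbhs_ballP => -[e e0 He]; exists e => // z hz; apply: He.
Qed.

Lemma qinv_char (F : R -> R) (t : R) : continuous F ->
  {homo F : x y / x <= y} -> (exists a, F a < t) -> (exists b, t < F b) ->
  exists x, [/\ qinvE F t = x%:E, qinv F t = x, F x = t &
     forall y, (t <= F y) <-> (x <= y)].
Proof.
move=> cF mF [a Fa] [b Fb].
pose S := [set y | t <= F y].
have lbS : lbound S a.
  move=> y Sy; rewrite leNgt; apply/negP => ya.
  have := mF _ _ (ltW ya); rewrite /S /= in Sy; lra.
have hlb : has_lbound S by exists a.
have S0 : S !=set0 by exists b; rewrite /S /=; exact: ltW.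
have hq : qinvE F t = (inf S)%:E by rewrite /qinvE ereal_inf_EFin.
set x := inf S in hq.
have below : forall y, y < x -> F y < t.
  move=> y yx; rewrite ltNge; apply/negP => Sy.
  have := ge_inf hlb Sy; rewrite -/x; lra.
have above : forall y, x < y -> t <= F y.
  move=> y xy; have [s Ss sy] := inf_lt S0 xy.
  exact: le_trans Ss (mF _ _ (ltW sy)).
have Fxt : F x = t.
  apply/eqP; rewrite eq_le; apply/andP; split.
    rewrite leNgt; apply/negP => tFx.
    have [e e0 He] := near_pt_gt cF tFx.
    have := below (x - e / 2); have := He (x - e / 2).
    have -> : x - (x - e / 2) = e / 2 by rewrite opprB addrC subrK.
    rewrite ger0_norm; last lra.
    move=> h1 h2; have := h1 ltac:(lra); have := h2 ltac:(lra); lra.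
  rewrite leNgt; apply/negP => tFx.
  have [e e0 He] := near_pt_lt cF tFx.
  have := above (x + e / 2); have := He (x + e / 2).
  have -> : x - (x + e / 2) = - (e / 2) by rewrite opprD addrA subrr add0r.
  rewrite normrN ger0_norm; last lra.
  move=> h1 h2; have := h1 ltac:(lra); have := h2 ltac:(lra); lra.
exists x; split => //.
  by rewrite /qinv hq.
move=> y; split => [ty|xy].
  rewrite leNgt; apply/negP => /below; lra.
by rewrite -Fxt; exact: mF.
Qed.

End Quant.
Section FD.
Variables (d0 : measure_display) (T : measurableType d0) (R : realType)
  (P : probability T R).

Lemma meas_le (Z : {RV P >-> R}) (y : R) : measurable [set w | Z w <= y].
Proof.
have := @measurable_funP _ _ _ _ setT Z measurableT _ (@measurable_itv _ `]-oo, y]).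
rewrite setTI; congr measurable; apply/seteqP; split => w /=; by rewrite in_itv.
Qed.

Lemma FdistE (Z : {RV P >-> R}) (y : R) :
  Fdist Z y = fine (P [set w | Z w <= y]).
Proof.
rewrite /Fdist /cdf /distribution /pushforward; congr (fine (P _)).
Qed.

Lemma Fdist_ge0 (Z : {RV P >-> R}) y : 0 <= Fdist Z y.
Proof. by rewrite /Fdist fine_ge0// cdf_ge0. Qed.

Lemma Fdist_le1 (Z : {RV P >-> R}) y : Fdist Z y <= 1.
Proof.
rewrite /Fdist -lee_fin fineK ?cdf_le1//.
by rewrite ge0_fin_numE ?cdf_ge0// (le_lt_trans (cdf_le1 _ _)) ?ltry.
Qed.

Lemma Fdist_fin (Z : {RV P >-> R}) y : cdf Z y \is a fin_num.
Proof. by rewrite ge0_fin_numE ?cdf_ge0// (le_lt_trans (cdf_le1 _ _)) ?ltry. Qed.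

Lemma Fdist_nd (Z : {RV P >-> R}) : {homo Fdist Z : x y / x <= y}.
Proof.
move=> x y xy; rewrite /Fdist fine_le ?Fdist_fin//; exact: cdf_nondecreasing.
Qed.

Lemma Fdist_hi (Z : {RV P >-> R}) t : t < 1 -> exists b, t < Fdist Z b.
Proof.
move=> t1.
have h : Fdist Z x @[x --> +oo%R] --> (1:R).
  exact: (fine_cvg (cvg_cdfy1 Z)).
have : \forall y \near +oo, t < Fdist Z y by exact: (cvgr_gt _ h).
case=> M [_ HM]; exists (M + 1); apply: HM; lra.
Qed.

Lemma Fdist_lo (Z : {RV P >-> R}) t : 0 < t -> exists a, Fdist Z a < t.
Proof.
move=> t0.
have h : Fdist Z x @[x --> -oo%R] --> (0:R).
  exact: (fine_cvg (cvg_cdfNy0 Z)).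
have : \forall y \near -oo, Fdist Z y < t by exact: (cvgr_lt _ h).
case=> M [_ HM]; exists (M - 1); apply: HM; lra.
Qed.

End FD.
Section Cop.
Local Close Scope classical_set_scope.
Local Open Scope set_scope.
Variable R : realType.

Lemma set1_n0 (T : finType) (y : T) : [set y] != finset.set0.
Proof. by apply/negP => /eqP/setP/(_ y); rewrite !inE eqxx. Qed.

Definition upd2 n (x : 'I_n -> R) (j : 'I_n) (a : R) (l : 'I_n) (b : R) :=
  fun i => if i \in [set j] then a else if i \in [set l] then b else x i.

Lemma two_inc n (C : ('I_n -> R) -> R) (hC : is_copula C) (j l : 'I_n)
  (jl : j != l) (x : 'I_n -> R) (hx : forall i, in01 (x i)) (sj tj sl tl : R) :
  in01 sj -> in01 tj -> in01 sl -> in01 tl -> sj <= tj -> sl <= tl ->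
  0 <= C (upd2 x j tj l tl) - C (upd2 x j sj l tl) - C (upd2 x j tj l sl)
       + C (upd2 x j sj l sl).
Proof.
move=> hsj htj hsl htl sjt slt.
case: hC => hg _ hinc.
pose a := upd2 (fun=> 0) j sj l sl.
pose b := upd2 x j tj l tl.
have ha : forall i, in01 (a i).
  move=> i; rewrite /a /upd2; case: ifP => // _; case: ifP => // _; rewrite /in01; lra.
have hb : forall i, in01 (b i).
  by move=> i; rewrite /b /upd2; case: ifP => // _; case: ifP.
have hab : forall i, a i <= b i.
  move=> i; rewrite /a /b /upd2; case: ifP => // _; case: ifP => // _.
  by case/andP: (hx i).
have := hinc a b ha hb hab.
pose f := fun S : {set 'I_n} => (-1) ^+ #|S| * C (fun i => if i \in S then a i else b i).
rewrite -/(\sum_S f S).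
have lj : l != j by rewrite eq_sym.
rewrite (bigD1 finset.set0) //= (bigD1 [set j]) //=; last exact: set1_n0.
rewrite (bigD1 [set l]) //=; last first.
  rewrite set1_n0 /=; apply/negP => /eqP/setP/(_ l); rewrite !inE eqxx (negbTE lj); done.
rewrite (bigD1 [set j; l]) //=; last first.
  apply/andP; split; first (apply/andP; split).
  - apply/negP => /eqP/setP/(_ l); rewrite !inE eqxx (negbTE lj) orbT.
    by [].
  - apply/negP => /eqP/setP/(_ l); rewrite !inE eqxx (negbTE lj) orbT.
    by [].
  - by apply/negP => /eqP/setP/(_ j); rewrite !inE eqxx (negbTE jl).
rewrite big1; last first.
  move=> S /andP[/andP[/andP[S0 S1] S2] S3].
  case: (pselect (exists2 k, k \in S & (k != j) && (k != l))) => [[k kS kjl]|hall]; last first.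
    exfalso; move: S0 S1 S2 S3.
    have hS : forall k, k \in S -> (k == j) || (k == l).
      move=> k kS; apply/negPn/negP => hk; apply: hall; exists k => //.
      by rewrite -negb_or.
    case Hj: (j \in S); case Hl: (l \in S).
    - have -> : S = [set j; l].
        by apply/setP => i; rewrite !inE; apply/idP/idP => [/hS//|/orP[]/eqP->].
      by rewrite eqxx ?andbF.
    - have -> : S = [set j].
        apply/setP => i; rewrite !inE; apply/idP/idP => [|/eqP->//].
        by move=> iS; case/orP: (hS i iS) => /eqP ie //; move: iS; rewrite ie Hl.
      by rewrite eqxx ?andbF.
    - have -> : S = [set l].
        apply/setP => i; rewrite !inE; apply/idP/idP => [|/eqP->//].
        by move=> iS; case/orP: (hS i iS) => /eqP ie //; move: iS; rewrite ie Hj.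
      by rewrite eqxx ?andbF.
    - have -> : S = finset.set0.
        apply/setP => i; rewrite !inE; apply/negP => iS.
        by case/orP: (hS i iS) => /eqP ie; move: iS; rewrite ie ?Hj ?Hl.
      by rewrite eqxx ?andbF.
  rewrite /f hg ?mulr0 //.
    by move=> i; case: ifP.
  exists k; rewrite kS /a /upd2 !inE; case/andP: kjl => /negbTE -> /negbTE -> //.
rewrite /f cards0 cards1 cards2 jl !expr0 expr1 !mul1r addr0.
have e0 : (fun i => if i \in finset.set0 then a i else b i) = upd2 x j tj l tl.
  by apply: funext => i; rewrite inE.
move/eqP: (jl) => jlP.
have e1 : (fun i => if i \in [set j] then a i else b i) = upd2 x j sj l tl.
  by apply: funext => i; rewrite /a /b /upd2 !inE; repeat (case: ifP => /eqP ?); congruence.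
have e2 : (fun i => if i \in [set l] then a i else b i) = upd2 x j tj l sl.
  by apply: funext => i; rewrite /a /b /upd2 !inE; repeat (case: ifP => /eqP ?); congruence.
have e3 : (fun i => if i \in [set j; l] then a i else b i) = upd2 x j sj l sl.
  apply: funext => i; rewrite /a /b /upd2 !inE.
  case: ifP => [/orP[]/eqP ?|/norP[]/eqP ? /eqP ?]; repeat (case: ifP => /eqP ?); congruence.
rewrite e0 e1 e2 e3 expr2 mulrNN mul1r !mulN1r. rewrite cards1 expr1 mulN1r mul1r; lra.
Qed.

End Cop.

Section Cav.
Variable R : realType.
Variable d : nat.
Local Notation n := d.+1.

Definition ext (u : 'I_d -> R) (v : R) : 'I_n -> R :=
  fun i => if unlift ord_max i is Some k then u k else v.
Definition upd (u : 'I_d -> R) (k : 'I_d) (a : R) : 'I_d -> R :=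
  fun k' => if k' == k then a else u k'.

Lemma CavE (C : ('I_n -> R) -> R) u v : Cav C u v = C (ext u v).
Proof. by []. Qed.

Lemma ext01 u v : (forall k, in01 (u k)) -> in01 v -> forall i, in01 (ext u v i).
Proof. by move=> hu hv i; rewrite /ext; case: unlift. Qed.

Lemma upd01 u k a : (forall k, in01 (u k)) -> in01 a -> forall k', in01 (upd u k a k').
Proof. by move=> hu ha k'; rewrite /upd; case: ifP. Qed.

Lemma lift_neq_max (k : 'I_d) : lift ord_max k <> ord_max.
Proof.
move=> /(congr1 val) /=; rewrite /bump leqNgt ltn_ord /= add0n => h.
by have := ltn_ord k; rewrite h ltnn.
Qed.

Lemma upd2_ext u v k a b :
  upd2 (ext u v) (lift ord_max k) a ord_max b = ext (upd u k a) b.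
Proof.
apply: funext => i; rewrite /upd2 /ext /upd !inE.
case: (unliftP ord_max i) => [k' ->|->]; rewrite ?liftK ?unlift_none;
  repeat (case: ifP => /eqP ?); try congruence.
all: try (match goal with H : lift _ _ = lift _ _ |- _ => move/lift_inj: H => H; congruence end).
all: try (match goal with H : lift _ _ = ord_max |- _ => by case: (lift_neq_max H) end).
all: try (match goal with H : ord_max = lift _ _ |- _ => by case: (lift_neq_max (esym H)) end).
Qed.

Lemma upd_id u k : upd u k (u k) = u.
Proof. by apply: funext => k'; rewrite /upd; case: eqP => // ->. Qed.

End Cav.

Section CavC.
Variable R : realType.
Variable d : nat.
Hypothesis hd : (0 < d)%N.
Variable C : ('I_d.+1 -> R) -> R.
Hypothesis hC : is_copula C.

Let k0 : 'I_d := Ordinal hd.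

Lemma Cav_grounded (u : 'I_d -> R) v : (forall k, in01 (u k)) -> in01 v ->
  (exists k, u k = 0) \/ v = 0 -> Cav C u v = 0.
Proof.
case: hC => hg _ _ hu hv h; rewrite CavE; apply: hg; first exact: ext01.
case: h => [[k hk]|->].
  by exists (lift ord_max k); rewrite /ext liftK.
by exists ord_max; rewrite /ext unlift_none.
Qed.

Lemma Cav_one v : in01 v -> Cav C (fun=> 1) v = v.
Proof.
case: hC => _ hm _ hv; rewrite CavE -{2}(hm ord_max v hv); congr C.
apply: funext => i; rewrite /ext.
case: (unliftP ord_max i) => [k' ->|->]; rewrite ?liftK ?unlift_none ?eqxx //.
by case: eqP => // /lift_neq_max.
Qed.

Lemma Cav_mono (u : 'I_d -> R) v v' : (forall k, in01 (u k)) ->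
  0 <= v -> v <= v' -> v' <= 1 -> Cav C u v <= Cav C u v'.
Proof.
move=> hu v0 vv v1.
have hv : in01 v by rewrite /in01; apply/andP; split; lra.
have hv' : in01 v' by rewrite /in01; apply/andP; split; lra.
have h0 : in01 (0:R) by rewrite /in01 lexx ler01.
have := @two_inc R _ C hC (lift ord_max k0) ord_max (ltac:(by rewrite eq_sym neq_lift)) (ext u v)
  (ext01 hu hv) 0 (u k0) v v' h0 (hu k0) hv hv'.
rewrite !upd2_ext !upd_id.
have hu0 : forall k, in01 (upd u k0 0 k) by apply: upd01.
rewrite !CavE.
rewrite -!CavE (Cav_grounded hu0 hv) ?(Cav_grounded hu0 hv') ; last 2 first.
- by left; exists k0; rewrite /upd eqxx.
- by left; exists k0; rewrite /upd eqxx.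
move=> h; have : 0 <= u k0 by case/andP: (hu k0).
lra.
Qed.

Lemma Cav_step (u : 'I_d -> R) v v' k a : (forall k, in01 (u k)) -> in01 a ->
  u k <= a -> 0 <= v -> v <= v' -> v' <= 1 ->
  Cav C u v' - Cav C u v <= Cav C (upd u k a) v' - Cav C (upd u k a) v.
Proof.
move=> hu ha ua v0 vv v1.
have hv : in01 v by rewrite /in01; apply/andP; split; lra.
have hv' : in01 v' by rewrite /in01; apply/andP; split; lra.
have := @two_inc R _ C hC (lift ord_max k) ord_max (ltac:(by rewrite eq_sym neq_lift)) (ext u v)
  (ext01 hu hv) (u k) a v v' (hu k) ha hv hv' ua vv.
rewrite !upd2_ext !upd_id -!CavE; lra.
Qed.

Lemma Cav_lip (u : 'I_d -> R) v v' : (forall k, in01 (u k)) ->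
  0 <= v -> v <= v' -> v' <= 1 -> Cav C u v' - Cav C u v <= v' - v.
Proof.
move=> hu v0 vv v1.
pose w (m : nat) := fun k : 'I_d => if (k < m)%N then 1 else u k.
have hw : forall m k, in01 (w m k).
  move=> m k; rewrite /w; case: ifP => // _; by rewrite /in01 ler01 lexx.
have ind : forall m, (m <= d)%N ->
    Cav C u v' - Cav C u v <= Cav C (w m) v' - Cav C (w m) v.
  elim => [_|m IH md].
    have -> : w 0%N = u by apply: funext => k; rewrite /w ltn0.
    exact: lexx.
  have md' : (m < d)%N by [].
  apply: le_trans (IH (ltnW md)) _.
  have -> : w m.+1 = upd (w m) (Ordinal md') 1.
    apply: funext => k; rewrite /w /upd ltnS leq_eqVlt.
    case: (eqVneq k (Ordinal md')) => [->|hk] /=; first by rewrite eqxx.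
    have -> : (k == m :> nat) = false.
      by apply: (contraNF _ hk) => /eqP hkm; apply/eqP; apply: val_inj; exact: hkm.
    by [].
  apply: Cav_step => //.
  - by rewrite /in01 ler01 lexx.
  - by rewrite /w /= ltnn; case/andP: (hu (Ordinal md')).
have := ind d (leqnn d).
have -> : w d = fun=> 1 by apply: funext => k; rewrite /w ltn_ord.
have hv : in01 v by rewrite /in01; apply/andP; split; lra.
have hv' : in01 v' by rewrite /in01; apply/andP; split; lra.
by rewrite !Cav_one.
Qed.

End CavC.

Section Meas.
Variables (d0 : measure_display) (T : measurableType d0) (R : realType)
  (P : probability T R).

Definition mR (S : set T) : R := fine (P S).

Lemma mR_fin S : measurable S -> P S \is a fin_num.
Proof. by move=> mS; apply: fin_num_measure. Qed.

Lemma mR_split S U : measurable S -> measurable U ->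
  mR S = mR (S `&` U) + mR (S `\` U).
Proof.
move=> mS mU; rewrite /mR (measureDI P mS mU) fineD 1?addrC //.
- by apply: mR_fin; exact: measurableD.
- by apply: mR_fin; exact: measurableI.
Qed.

Lemma mR_C S : measurable S -> mR (~` S) = 1 - mR S.
Proof.
move=> mS; rewrite /mR probability_setC // fineB //; exact: mR_fin.
Qed.

Lemma mR_le S U : measurable S -> measurable U -> S `<=` U -> mR S <= mR U.
Proof.
move=> mS mU SU; rewrite /mR fine_le ?mR_fin //; apply: le_measure => //; by rewrite inE.
Qed.

Lemma mR_ge0 S : 0 <= mR S.
Proof. by rewrite /mR fine_ge0. Qed.

Lemma mR_T : mR setT = 1.
Proof. by rewrite /mR probability_setT. Qed.

End Meas.

Lemma qinvE0 (R : realType) (F : R -> R) : (forall x, 0 <= F x) -> qinvE F 0 = -oo%E.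
Proof.
move=> F0; rewrite /qinvE.
set S := [set _ | _ in _].
have H : forall r : R, (ereal_inf S <= r%:E)%E.
  by move=> r; apply: ereal_inf_lbound; exists r => //; exact: F0.
move: (H 0); case E: (ereal_inf S) => [s| |] // _.
by exfalso; have := H (s - 1)%R; rewrite E lee_fin; lra.
Qed.

Section Cond.
Variables (d0 : measure_display) (T : measurableType d0) (R : realType)
  (P : probability T R).

Lemma cond_formula (d : nat) (hd : (0 < d)%N) (X : 'I_d -> {RV P >-> R})
  (Y : {RV P >-> R}) (C : ('I_d.+1 -> R) -> R) (alpha : 'I_d -> R) :
  (forall i, continuous (Fdist (X i))) -> copula_of X Y C ->
  (forall i, 0 <= alpha i < 1) -> Cav C alpha 1 < 1 ->
  forall y, cond_cdf (vevent X alpha) Y y =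
    (Fdist Y y - Cav C alpha (Fdist Y y)) / (1 - Cav C alpha 1).
Proof.
move=> cX [hC hcop] ha c1.
have ha01 : forall i, in01 (alpha i).
  by move=> i; case/andP: (ha i) => a0 a1; rewrite /in01 a0 ltW.
have hF01 : forall y, in01 (Fdist Y y).
  by move=> y; rewrite /in01 Fdist_ge0 Fdist_le1.
have h1 : in01 (1:R) by rewrite /in01 ler01 lexx.
case: (pselect (exists i, alpha i = 0)) => [[i0 hi0]|hpos] y.
  have -> : vevent X alpha = setT.
    apply/seteqP; split => // w _; exists i0; rewrite hi0 /VaRE qinvE0 ?ltNyr //.
    by move=> x; exact: Fdist_ge0.
  rewrite !(Cav_grounded hC ha01) //; try by left; exists i0.
  rewrite /cond_cdf setIT probability_setT /= FdistE !subr0 //.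
have hpos' : forall i, 0 < alpha i.
  move=> i; case/andP: (ha i) => a0 _; rewrite lt_neqAle a0 andbT eq_sym.
  by apply/eqP => hi; apply: hpos; exists i.
pose q i := VaR (X i) (alpha i).
have hq : forall i, VaRE (X i) (alpha i) = (q i)%:E /\ Fdist (X i) (q i) = alpha i.
  move=> i.
  have [x [h1' h2 h3 _]] := qinv_char (cX i) (@Fdist_nd _ _ _ _ (X i))
    (Fdist_lo (X i) (hpos' i)) (Fdist_hi (X i) (proj2 (andP (ha i)))).
  by rewrite /q /VaRE /VaR h1' h2 h3.
pose A := [set w | forall i, X i w <= q i].
have mA : measurable A.
  have -> : A = \bigcap_(i in [set: 'I_d]) [set w | X i w <= q i].
    apply/seteqP; split => w /= hw i; first by move=> _; exact: hw.
    exact: (hw i I).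
  apply: fin_bigcap_measurable; first exact: finite_finset.
  by move=> i _; exact: meas_le.
have hE : vevent X alpha = ~` A.
  apply/seteqP; split => w /=.
    case=> i; rewrite (proj1 (hq i)) lte_fin => hi hall.
    by have := hall i; lra.
  move/existsNP => [i /negP]; rewrite -ltNge => hi.
  by exists i; rewrite (proj1 (hq i)) lte_fin.
have hBA : forall y, mR P (A `&` [set w | Y w <= y]) = Cav C alpha (Fdist Y y).
  move=> y'; have := hcop q y'.
  have -> : (fun i => Fdist (X i) (q i)) = alpha.
    by apply: funext => i; rewrite (proj2 (hq i)).
  by move=> <-.
have mB : forall y, measurable [set w | Y w <= y] by move=> y'; exact: meas_le.
have hFB : forall y, Fdist Y y = mR P [set w | Y w <= y] by move=> y'; rewrite FdistE.
have hpA : mR P A = Cav C alpha 1.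
  apply/eqP; rewrite eq_le; apply/andP; split; rewrite leNgt; apply/negP => hlt.
  - have [y' hy'] := Fdist_hi Y (ltac:(lra) : 1 - (mR P A - Cav C alpha 1) < 1).
    have e1 := mR_split P mA (mB y').
    have e2 : mR P (A `\` [set w | Y w <= y']) <= 1 - Fdist Y y'.
      rewrite hFB -mR_C //; apply: mR_le; [exact: measurableD | exact: measurableC | by move=> w []].
    have e3 := Cav_mono hd hC ha01 (proj1 (andP (hF01 y'))) (proj2 (andP (hF01 y'))) (lexx (1:R)).
    rewrite hBA in e1; lra.
  - have [y' hy'] := Fdist_hi Y (ltac:(lra) : 1 - (Cav C alpha 1 - mR P A) < 1).
    have e1 : mR P (A `&` [set w | Y w <= y']) <= mR P A.
      by apply: mR_le; [exact: measurableI | exact: mA | move=> w []].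
    have e3 := Cav_lip hC ha01 (proj1 (andP (hF01 y'))) (proj2 (andP (hF01 y'))) (lexx (1:R)).
    rewrite hBA in e1; lra.
rewrite /cond_cdf hE.
have -> : fine (P (~` A)) = 1 - Cav C alpha 1 by rewrite -hpA -mR_C.
congr (_ / _).
have e := mR_split P (mB y) mA; rewrite setIC hBA -hFB /mR setDE in e.
lra.
Qed.

End Cond.

Lemma cont_lip (R : realType) (F G : R -> R) (K : R) : continuous F -> 0 < K ->
  (forall y z, `|G y - G z| <= K * `|F y - F z|) -> continuous G.
Proof.
move=> cF K0 hl x.
apply/(@cvgrPdist_lt _ R^o _ _ (nbhs_filter x)) => e e0.
have : \forall z \near x, `|F x - F z| < e / K.
  by move: (cF x) => /(@cvgrPdist_lt _ R^o _ _ (nbhs_filter x)); apply; exact: divr_gt0.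
apply: filterS => z hz.
apply: le_lt_trans (hl x z) _.
have -> : e = K * (e / K) by rewrite mulrCA divff ?mulr1 // gt_eqF.
by rewrite ltr_pM2l.
Qed.

Lemma le_frac (R : realType) (p q r s : R) : 0 < q -> 0 < s ->
  (p / q <= r / s) = (p * s <= r * q).
Proof. by move=> q0 s0; rewrite ler_pdivrMr // mulrAC ler_pdivlMr. Qed.

Definition hfun (R : realType) (d : nat) (C : ('I_d.+1 -> R) -> R) (a : 'I_d -> R) (v : R) :=
  (v - Cav C a v) / (1 - Cav C a 1).

Section Side.
Variables (d0 : measure_display) (T : measurableType d0) (R : realType)
  (P : probability T R).

Lemma qinv_mono (Y : {RV P >-> R}) : continuous (Fdist Y) ->
  forall s t, 0 < s -> s <= t -> t < 1 -> qinv (Fdist Y) s <= qinv (Fdist Y) t.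
Proof.
move=> cY s t s0 st t1.
have [xs [_ -> Fs hs]] := qinv_char cY (@Fdist_nd _ _ _ _ Y) (Fdist_lo Y s0)
  (Fdist_hi Y (le_lt_trans st t1)).
have [xt [_ -> Ft ht]] := qinv_char cY (@Fdist_nd _ _ _ _ Y)
  (Fdist_lo Y (lt_le_trans s0 st)) (Fdist_hi Y t1).
by apply/hs; rewrite Ft.
Qed.

Lemma side (d : nat) (hd : (0 < d)%N) (X : 'I_d -> {RV P >-> R})
  (Y : {RV P >-> R}) (C : ('I_d.+1 -> R) -> R) (alpha : 'I_d -> R) (beta : R) :
  (forall i, continuous (Fdist (X i))) -> continuous (Fdist Y) ->
  copula_of X Y C ->
  (forall i, 0 <= alpha i < 1) -> Cav C alpha 1 < 1 -> 0 < beta < 1 ->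
  exists g, [/\ 0 < g < 1, hfun C alpha g = beta,
    VCoVaR X Y alpha beta = qinv (Fdist Y) g &
    forall v, 0 < v < 1 -> beta <= hfun C alpha v -> g <= v].
Proof.
move=> cX cY cop ha c1 /andP[b0 b1].
have hC := proj1 cop.
have ha01 : forall i, in01 (alpha i).
  by move=> i; case/andP: (ha i) => a0 a1; rewrite /in01 a0 ltW.
have hF01 : forall y, in01 (Fdist Y y).
  by move=> y; rewrite /in01 Fdist_ge0 Fdist_le1.
set c := Cav C alpha 1 in c1.
pose K := (1 - c)^-1.
have K0 : 0 < K by rewrite /K invr_gt0 subr_gt0.
have hh0 : hfun C alpha 0 = 0.
  rewrite /hfun (Cav_grounded hC ha01) ?subrr ?mul0r //; last by right.
  by rewrite /in01 lexx ler01.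
have hh1 : hfun C alpha 1 = 1.
  by rewrite /hfun -/c divff // subr_eq0 eq_sym lt_eqF.
have hlip : forall v v', 0 <= v -> v <= v' -> v' <= 1 ->
    0 <= hfun C alpha v' - hfun C alpha v <= K * (v' - v).
  move=> v v' v0 vv v1.
  have m1 := Cav_mono hd hC ha01 v0 vv v1.
  have m2 := Cav_lip hC ha01 v0 vv v1.
  have -> : hfun C alpha v' - hfun C alpha v =
      (v' - v - (Cav C alpha v' - Cav C alpha v)) * K.
    rewrite /hfun /K -/c; field; rewrite subr_eq0 eq_sym lt_eqF //.
  apply/andP; split; nra.
pose G := fun y => hfun C alpha (Fdist Y y).
have hG : cond_cdf (vevent X alpha) Y = G.
  by apply: funext => y; rewrite (cond_formula hd cX cop ha c1).
have cG : continuous G.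
  apply: (cont_lip cY K0) => y z; rewrite /G.
  have [hyz|hzy] := leP (Fdist Y y) (Fdist Y z).
    have := hlip _ _ (proj1 (andP (hF01 y))) hyz (proj2 (andP (hF01 z))).
    move=> /andP[e1 e2]; rewrite distrC ger0_norm // [`|Fdist Y y - _|]distrC.
    rewrite ger0_norm; lra.
  have := hlip _ _ (proj1 (andP (hF01 z))) (ltW hzy) (proj2 (andP (hF01 y))).
  move=> /andP[e1 e2]; rewrite ger0_norm // ger0_norm; lra.
have mG : {homo G : x y / x <= y}.
  move=> x y xy; have := hlip _ _ (proj1 (andP (hF01 x))) (@Fdist_nd _ _ _ _ Y _ _ xy) (proj2 (andP (hF01 y))).
  rewrite /G; move=> /andP[e1 _]; lra.
have loG : forall t, 0 < t -> exists a, G a < t.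
  move=> t t0; have [a ha'] := Fdist_lo Y (divr_gt0 t0 K0).
  exists a; have := hlip _ _ (lexx 0) (proj1 (andP (hF01 a))) (proj2 (andP (hF01 a))).
  rewrite /G hh0 subr0 subr0 => /andP[_ e2].
  have : K * Fdist Y a < t.
    by rewrite mulrC -ltr_pdivlMr.
  lra.
have hiG : forall t, t < 1 -> exists b, t < G b.
  move=> t t1.
  have e : 0 < (1 - t) / K by apply: divr_gt0 => //; lra.
  have hlt : 1 - (1 - t) / K < 1 by lra.
  have [b hb] := Fdist_hi Y hlt.
  exists b; have := hlip _ _ (proj1 (andP (hF01 b))) (proj2 (andP (hF01 b))) (lexx 1).
  rewrite /G hh1 => /andP[_ e2].
  have : K * (1 - Fdist Y b) < 1 - t.
    rewrite mulrC -ltr_pdivlMr //; lra.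
  lra.
have [x1 [_ hx1 Gx1 cx1]] := qinv_char cG mG (loG _ b0) (hiG _ b1).
pose g := Fdist Y x1.
have hg : hfun C alpha g = beta by [].
have g0 : 0 < g.
  rewrite lt_neqAle Fdist_ge0 andbT; apply/eqP => g0.
  by move: hg; rewrite -g0 hh0 => h; move: b0; rewrite -h ltxx.
have g1 : g < 1.
  rewrite lt_neqAle Fdist_le1 andbT; apply/eqP => g1.
  by move: hg; rewrite g1 hh1 => h; move: b1; rewrite -h ltxx.
have [z [_ hz Fz cz]] := qinv_char cY (@Fdist_nd _ _ _ _ Y) (Fdist_lo Y g0) (Fdist_hi Y g1).
have zx : z = x1.
  apply/eqP; rewrite eq_le; apply/andP; split.
    by apply/cz; rewrite /g.
  by apply/cx1; rewrite /G Fz hg.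
exists g; split.
- by rewrite g0 g1.
- exact: hg.
- by rewrite /VCoVaR hG hx1 hz zx.
- move=> v /andP[v0 v1] hv.
  have [zv [_ _ Fzv czv]] := qinv_char cY (@Fdist_nd _ _ _ _ Y) (Fdist_lo Y v0) (Fdist_hi Y v1).
  have : x1 <= zv by apply/cx1; rewrite /G Fzv.
  by move/(@Fdist_nd _ _ _ _ Y); rewrite Fzv.
Qed.

End Side.

Lemma hcomp (R : realType) (d : nat) (C1 C2 : ('I_d.+1 -> R) -> R) (alpha : 'I_d -> R) :
  is_copula C1 -> is_copula C2 -> (forall i, in01 (alpha i)) ->
  Cav C1 alpha 1 < 1 -> Cav C2 alpha 1 < 1 ->
  (forall v : R, 0 < v <= 1 -> l_alpha C1 C2 alpha 1 <= l_alpha C1 C2 alpha v) ->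
  forall v, 0 < v < 1 -> hfun C2 alpha v <= hfun C1 alpha v.
Proof.
move=> hC1 hC2 ha01 c1 c2 hl v /andP[v0 v1].
have h0 : in01 (0:R) by rewrite /in01 lexx ler01.
have p1 : 0 <= v - Cav C1 alpha v.
  have := Cav_lip hC1 ha01 (lexx 0) (ltW v0) (ltW v1).
  rewrite (Cav_grounded hC1 ha01 h0) //; [lra | by right].
have p2 : 0 <= v - Cav C2 alpha v.
  have := Cav_lip hC2 ha01 (lexx 0) (ltW v0) (ltW v1).
  rewrite (Cav_grounded hC2 ha01 h0) //; [lra | by right].
have := hl v (ltac:(rewrite v0 ltW)).
rewrite /l_alpha /hfun.
have q1 : 0 < 1 - Cav C1 alpha 1 by lra.
have q2 : 0 < 1 - Cav C2 alpha 1 by lra.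
case: (eqVneq (v - Cav C2 alpha v) 0) => [->|ne] hl'.
  by rewrite mul0r divr_ge0 // ltW.
have s0 : 0 < v - Cav C2 alpha v by rewrite lt_neqAle eq_sym ne p2.
rewrite le_frac // in hl'; rewrite le_frac // mulrC; exact: hl'.
Qed.

Lemma hltd (R : realType) (d : nat) (C : ('I_d.+1 -> R) -> R) (alpha : 'I_d -> R) :
  LTD1 C -> (forall i, in01 (alpha i)) -> Cav C alpha 1 < 1 ->
  forall v, 0 < v -> v <= 1 -> hfun C alpha v <= v.
Proof.
move=> hL ha01 c1 v v0 v1.
have := hL alpha ha01 v 1 v0 v1 (lexx 1).
rewrite divr1 ler_pdivlMr ?subr_gt0 // => h.
rewrite /hfun ler_pdivrMr ?subr_gt0 //; nra.
Qed.

Unset Implicit Arguments.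

Theorem theorem4p2 (R : realType) (d : nat) (hd : (1 <= d)%N)
  (d1 : measure_display) (T1 : measurableType d1) (P1 : probability T1 R)
  (X1 : 'I_d -> {RV P1 >-> R}) (Y1 : {RV P1 >-> R})
  (d2 : measure_display) (T2 : measurableType d2) (P2 : probability T2 R)
  (X2 : 'I_d -> {RV P2 >-> R}) (Y2 : {RV P2 >-> R})
  (C1 C2 : ('I_d.+1 -> R) -> R) (alpha : 'I_d -> R) :
  (forall i, continuous (Fdist (X1 i))) -> continuous (Fdist Y1) ->
  (forall i, continuous (Fdist (X2 i))) -> continuous (Fdist Y2) ->
  copula_of X1 Y1 C1 -> copula_of X2 Y2 C2 ->
  (forall i, 0 <= alpha i < 1) ->
  Cav C1 alpha 1 < 1 -> Cav C2 alpha 1 < 1 ->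
  (LTD1 C1 \/ LTD1 C2) ->
  (forall v : R, 0 < v <= 1 -> l_alpha C1 C2 alpha 1 <= l_alpha C1 C2 alpha v) ->
  (disp_le (Fdist Y1) (Fdist Y2) ->
     forall beta : R, 0 < beta < 1 ->
       DVCoVaR X1 Y1 alpha beta <= DVCoVaR X2 Y2 alpha beta) /\
  (star_le (Fdist Y1) (Fdist Y2) ->
     forall beta : R, 0 < beta < 1 ->
       DRVCoVaR X1 Y1 alpha beta <= DRVCoVaR X2 Y2 alpha beta).
Proof.
move=> cX1 cY1 cX2 cY2 cop1 cop2 ha c1 c2 hL hl.
have ha01 : forall i, in01 (alpha i).
  by move=> i; case/andP: (ha i) => a0 a1; rewrite /in01 a0 ltW.
have key : forall beta, 0 < beta < 1 -> exists g1 g2,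
    [/\ 0 < g1 < 1, 0 < g2 < 1, g1 <= g2, beta <= g2 &
      VCoVaR X1 Y1 alpha beta = qinv (Fdist Y1) g1 /\
      VCoVaR X2 Y2 alpha beta = qinv (Fdist Y2) g2].
  move=> beta hb.
  have [g1 [hg1 h1 e1 m1]] := side hd cX1 cY1 cop1 ha c1 hb.
  have [g2 [hg2 h2 e2 m2]] := side hd cX2 cY2 cop2 ha c2 hb.
  have g12 : g1 <= g2.
    apply: m1 => //; rewrite -h2.
    exact: (hcomp (proj1 cop1) (proj1 cop2) ha01 c1 c2 hl hg2).
  exists g1, g2; split => //.
  case: hL => hL.
    apply: le_trans g12; rewrite -h1.
    by apply: (hltd hL ha01 c1); case/andP: hg1 => // _ /ltW.
  rewrite -h2.
  by apply: (hltd hL ha01 c2); case/andP: hg2 => // _ /ltW.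
split.
  move=> hdisp beta hb.
  have [g1 [g2 [/andP[g10 g11] /andP[g20 g21] g12 bg2 [e1 e2]]]] := key beta hb.
  case/andP: hb => b0 b1.
  rewrite /DVCoVaR /VaR e1 e2.
  have m2 := qinv_mono cY2 g10 g12 g21.
  have m2' := qinv_mono cY2 b0 bg2 g21.
  have [bg1|g1b] := leP beta g1.
    have := hdisp beta g1 b0 bg1 g11; lra.
  have m1 := qinv_mono cY1 g10 (ltW g1b) b1.
  lra.
move=> [hpos hinc] beta hb.
have [g1 [g2 [/andP[g10 g11] /andP[g20 g21] g12 bg2 [e1 e2]]]] := key beta hb.
case/andP: (hb) => b0 b1.
rewrite /DRVCoVaR /DVCoVaR /VaR e1 e2.
have [p1b p2b] := hpos beta hb.
have [p1g p2g] := hpos g1 (ltac:(by rewrite g10 g11)).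
have m2 := qinv_mono cY2 g10 g12 g21.
have m2' := qinv_mono cY2 b0 bg2 g21.
rewrite le_frac //.
have [bg1|g1b] := leP beta g1.
  have := hinc beta g1 b0 bg1 g11; rewrite le_frac // => hs.
  nra.
have m1 := qinv_mono cY1 g10 (ltW g1b) b1.
nra.
Qed.
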